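(* Let $S$ be a CLP-compact semitopological semigroup which contains a graph inverse semigroup $G(E)$ as a dense subsemigroup. Then for each subset $X\subset G(E)$ the closure $\overline{X}^S$ is countably compact at $X$.
   Context: All spaces are Hausdorff. A semitopological semigroup is a space with separately continuous associative multiplication. CLP-compact: every cover by clopen sets has a finite subcover. A space $W$ is countably compact at $A\subset W$ if every infinite $B\subset A$ has an accumulation point in $W$. A directed graph $E=(E^0,E^1,r,s)$ has vertices $E^0$, edges $E^1$, source/range maps $s,r:E^1\to E^0$; paths are vertices and sequences of edges $e_1\ldots e_n$ with $r(e_i)=s(e_{i+1})$. The graph inverse semigroup $G(E)$ is the semigroup with zero $0$ generated by $E^0$, $E^1$, $E^{-1}=\{e^{-1}\mid e\in E^1\}$ subject to: for $a,b\in E^0$, $e,f\in E^1$: $ab=a$ if $a=b$, else $0$; $s(e)e=er(e)=e$; $e^{-1}s(e)=r(e)e^{-1}=e^{-1}$; $e^{-1}f=r(e)$ if $e=f$, else $0$. *)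

(* Defs.v *)
From mathcomp Require Import all_boot all_order.
From mathcomp Require Import all_classical all_reals topology.
Set Implicit Arguments. Unset Strict Implicit. Unset Printing Implicit Defensive.
Local Open Scope classical_set_scope.

(* A directed graph E = (E^0, E^1, r, s): vertex type V, edge type Ed,
   source map [gsrc] and range map [grng]. *)

Section GraphInverse.
Variables (V Ed : eqType) (gsrc grng : Ed -> V).

(* A path is represented as a pair (v, es): a start vertex v and a finite
   sequence of edges es = e_1 ... e_n with s(e_1) = v and r(e_i) = s(e_(i+1)).
   When es = [::] the pair represents the vertex v itself (a path of length 0). *)
Definition gpath := (V * seq Ed)%type.

Fixpoint walk (v : V) (es : seq Ed) : bool :=
  if es is e :: es' then (gsrc e == v) && walk (grng e) es' else true.

Definition is_path (p : gpath) : bool := walk p.1 p.2.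

Definition psrc (p : gpath) : V := p.1.
Definition prng (p : gpath) : V := last p.1 (map grng p.2).

(* Normal form of G(E): 0 is [None]; a nonzero element u v^{-1}, with u, v
   paths and r(u) = r(v), is [Some (u, v)]. *)
Definition GIraw := option (gpath * gpath).

Definition GIelem : set GIraw :=
  [set x | match x with
           | None => True
           | Some (u, v) => [/\ is_path u, is_path v & prng u = prng v]
           end].

(* Product in normal form:
   (a b^{-1})(c d^{-1}) = a c' d^{-1}     if c = b c',
                        = a (d b')^{-1}   if b = c b',
                        = 0               otherwise. *)
Definition GImul (x y : GIraw) : GIraw :=
  match x, y with
  | Some (a, b), Some (c, d) =>
      if (c.1 == b.1) && prefix b.2 c.2 then
        Some ((a.1, a.2 ++ drop (size b.2) c.2), d)
      else if (b.1 == c.1) && prefix c.2 b.2 then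
        Some (a, (d.1, d.2 ++ drop (size c.2) b.2))
      else None
  | _, _ => None
  end.

Definition GIzero : GIraw := None.
Definition GIvertex (v : V) : GIraw := Some ((v, [::]), (v, [::])).
Definition GIedge (e : Ed) : GIraw := Some ((gsrc e, [:: e]), (grng e, [::])).
Definition GIinvedge (e : Ed) : GIraw := Some ((grng e, [::]), (gsrc e, [:: e])).

End GraphInverse.

Definition semitopological_semigroup (S : topologicalType) (mul : S -> S -> S) :=
  associative mul /\
  (forall a : S, continuous (mul a)) /\
  (forall a : S, continuous (fun x => mul x a)).

Definition CLP_compact (S : topologicalType) :=
  forall F : set (set S),
    (forall A, F A -> clopen A) -> [set: S] `<=` \bigcup_(A in F) A ->
    exists2 G : set (set S), finite_set G /\ G `<=` F &
                             [set: S] `<=` \bigcup_(A in G) A.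

(* Since accumulation points in the
   subspace W are exactly the points of W that are accumulation points in S,
   we state it with [limit_point] of S. *)
Definition countably_compact_at (S : topologicalType) (W A : set S) :=
  forall B : set S, B `<=` A -> infinite_set B ->
    exists2 x, W x & limit_point B x.

(* Main.v *)
Require Import Defs.
From mathcomp Require Import all_boot all_order.
From mathcomp Require Import all_classical all_reals topology.
Local Open Scope classical_set_scope.

Section Comb.
Set Implicit Arguments. Unset Strict Implicit.
Variables (V Ed : eqType) (gsrc grng : Ed -> V).
Local Notation G := (GIelem gsrc grng).

Lemma vert_src (w0 a1 b1 : V) (a2 b2 : seq Ed) :
  GImul (GIvertex Ed w0) (Some ((a1, a2), (b1, b2))) != None -> a1 = w0.
Proof.
rewrite /=; case: (eqVneq a1 w0) => [->|ne] //; by rewrite [w0 == a1]eq_sym (negbTE ne).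
Qed.

Lemma vert_src' (w0 a1 b1 : V) (a2 b2 : seq Ed) :
  GImul (Some ((a1, a2), (b1, b2))) (GIvertex Ed w0) != None -> b1 = w0.
Proof.
rewrite /=; case: (eqVneq b1 w0) => [->|ne] //; by rewrite [w0 == b1]eq_sym (negbTE ne).
Qed.

Lemma vert_noedge (w0 : V) (y : GIraw V Ed) : G y ->
  (forall e, gsrc e != w0) ->
  GImul (GIvertex Ed w0) y != None -> GImul y (GIvertex Ed w0) != None ->
  y = GIvertex Ed w0.
Proof.
case: y => [[[a1 a2] [b1 b2]]|] //= [pa pb _] Hne.
move=> /vert_src E1 /vert_src' E2; subst a1 b1.
move: pa pb; rewrite /is_path /=.
case: a2 => [|c a2] /=; last by rewrite (negbTE (Hne c)).
by case: b2 => [|c b2] /=; [|rewrite (negbTE (Hne c))].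
Qed.

Definition idem_e (w0 : V) (e : Ed) : GIraw V Ed :=
  Some ((w0, [:: e]), (w0, [:: e])).

Lemma vert_edge (w0 : V) (e : Ed) (y : GIraw V Ed) : G y ->
  gsrc e = w0 ->
  GImul (GIvertex Ed w0) y != None -> GImul y (GIvertex Ed w0) != None ->
  GImul (GIinvedge gsrc grng e) y != None -> GImul y (GIedge gsrc grng e) != None ->
  [\/ y = GIvertex Ed w0, GImul (idem_e w0 e) y = y | GImul y (idem_e w0 e) = y].
Proof.
case: y => [[[a1 a2] [b1 b2]]|] //= [pa pb _] He.
move=> /vert_src E1 /vert_src' E2; subst a1 b1 w0.
case: a2 pa => [|c a2] pa.
  case: b2 pb => [|d b2] pb; first by move=> *; constructor 1.
  move=> _ H; constructor 3; move: H => /=.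
  case: (eqVneq d e) => [->|ne]; last by rewrite /= !andbF.
  by case: b2 {pb} => [|x b2] //=; rewrite ?eqxx ?drop0.
move=> H _; constructor 2; move: H => /=.
case: (eqVneq c e) => [->|ne].
  by rewrite !eqxx /= ?prefix0s /= drop0.
by rewrite /= !andbF.
Qed.

Lemma mulS (A B C D X Y : gpath V Ed) :
  GImul (Some (A, B)) (Some (C, D)) = Some (X, Y) ->
  (C.1 = B.1 /\ exists s, C.2 = B.2 ++ s /\ X = (A.1, A.2 ++ s) /\ Y = D) \/
  (B.1 = C.1 /\ exists s, B.2 = C.2 ++ s /\ X = A /\ Y = (D.1, D.2 ++ s)).
Proof.
rewrite /=; case: ifP => [/andP[/eqP E /prefixP[s Es]] [<- <-]|_].
  by left; split => //; exists s; rewrite Es drop_size_cat.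
case: ifP => [/andP[/eqP E /prefixP[s Es]] [<- <-]|//].
by right; split => //; exists s; rewrite Es drop_size_cat //; case: A.
Qed.

Definition uinv (u : gpath V Ed) : GIraw V Ed := Some ((prng grng u, [::]), u).
Definition vpth (v : gpath V Ed) : GIraw V Ed := Some (v, (prng grng v, [::])).
Definition cand (u v : gpath V Ed) (j : nat) : GIraw V Ed :=
  Some ((u.1, take j u.2), (v.1, take (size v.2 - (size u.2 - j)) v.2)).

Lemma cand_of (u v a b : gpath V Ed) (t : seq Ed) :
  a.1 = u.1 -> b.1 = v.1 -> u.2 = a.2 ++ t -> v.2 = b.2 ++ t ->
  exists2 j, j <= size u.2 & Some (a, b) = cand u v j.
Proof.
case: u => u1 u2; case: v => v1 v2; case: a => a1 a2; case: b => b1 b2 /= -> -> -> ->.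
exists (size a2); first by rewrite size_cat leq_addr.
rewrite /cand /= take_size_cat // !size_cat addKn addnK take_size_cat //.
Qed.

Lemma reduce (u v : gpath V Ed) (y : GIraw V Ed) :
  GImul (GImul (uinv u) y) (vpth v) = GIvertex Ed (prng grng u) ->
  exists2 j, j <= size u.2 & y = cand u v j.
Proof.
case: y => [[a b]|] //.
case E1: (GImul (uinv u) (Some (a, b))) => [[X Y]|] //.
rewrite /vpth /GIvertex => /mulS.
move/mulS: E1 => [[Ea [s [Es [-> ->]]]] | [Ea [s [Es [-> ->]]]]] /=.
- move=> [[Eb [s' [Es' [[] ]]]]|[Eb [s' [Es' [[] ]]]]].
  + move=> /esym/eqP; rewrite -size_eq0 size_cat addn_eq0 => /andP[/nilP s0 /nilP s'0] _.
    subst s s'; apply: (@cand_of u v a b [::]); rewrite ?cats0 in Es Es' *; by [|apply/esym].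
  + move=> s0 [_ s'0]; subst s s'; apply: (@cand_of u v a b [::]); rewrite ?cats0 in Es Es' *; by [|apply/esym].
- move=> [[Eb [s' [Es' [[s'0] _]]]]|[Eb [s' [Es' [_ [_ s'0]]]]]]; subst s'; rewrite ?cats0 in Es'.
  + by apply: (@cand_of u v a b s); by [|apply/esym].
  + by apply: (@cand_of u v a b s); by [|apply/esym].
Qed.

Lemma walk_cat (x : V) (p q : seq Ed) :
  walk gsrc grng x (p ++ q) = walk gsrc grng x p && walk gsrc grng (last x (map grng p)) q.
Proof. by elim: p x => [|e p IH] x //=; rewrite IH andbA. Qed.

Lemma prng_cat (x : V) (p q : seq Ed) :
  prng grng (x, p ++ q) = prng grng (prng grng (x, p), q).
Proof. by rewrite /prng /= map_cat last_cat. Qed.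

Lemma G_mul x y : G x -> G y -> G (GImul x y).
Proof.
case: x => [[A B]|] //; case: y => [[C D]|] //.
case E: (GImul _ _) => [[X Y]|] //.
move/mulS: E => [[EC [s [Es [-> ->]]]]|[EB [s [Es [-> ->]]]]].
- case: A => a1 a2; case: B EC Es => b1 b2; case: C => c1 c2 /= -> -> {c1 c2}.
  move=> [pa pb eab] [pc pd ecd]; split => //.
  + move: pc; rewrite /is_path /= walk_cat => /andP[_ ps].
    rewrite /is_path /= walk_cat; move: pa; rewrite /is_path /= => -> /=.
    by move: eab; rewrite /prng /= => ->.
  + by rewrite prng_cat -ecd prng_cat eab.
- case: C EB Es => c1 c2; case: B => b1 b2 /= -> -> {b1 b2}.
  case: D => d1 d2.
  move=> [pa pb eab] [pc pd ecd]; split => //.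
  + move: pb; rewrite /is_path /= walk_cat => /andP[_ ps].
    rewrite /is_path /= walk_cat; move: pd; rewrite /is_path /= => -> /=.
    by move: ecd; rewrite /prng /= => <-.
  + by rewrite eab /= prng_cat ecd -prng_cat.
Qed.

Lemma G_vertex (w0 : V) : G (GIvertex Ed w0). Proof. by []. Qed.
Lemma G_uinv u : is_path gsrc grng u -> G (uinv u). Proof. by []. Qed.
Lemma G_vpth v : is_path gsrc grng v -> G (vpth v). Proof. by []. Qed.
Lemma G_invedge e : G (GIinvedge gsrc grng e).
Proof. by split => //; rewrite /is_path /= eqxx. Qed.
Lemma G_edge e : G (GIedge gsrc grng e).
Proof. by split => //; rewrite /is_path /= eqxx. Qed.
Lemma G_idem (w0 : V) e : gsrc e = w0 -> G (idem_e w0 e).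
Proof. by move=> <-; split => //; rewrite /is_path /= eqxx. Qed.
Lemma G_None : G None. Proof. by []. Qed.

Lemma mulWW (w0 : V) : GImul (GIvertex Ed w0) (GIvertex Ed w0) = GIvertex Ed w0.
Proof. by rewrite /= eqxx. Qed.
Lemma mul_invW (w0 : V) e : gsrc e = w0 ->
  GImul (GIinvedge gsrc grng e) (GIvertex Ed w0) = GIinvedge gsrc grng e.
Proof. by move=> <-; rewrite /= eqxx. Qed.
Lemma mul_Wedge (w0 : V) e : gsrc e = w0 ->
  GImul (GIvertex Ed w0) (GIedge gsrc grng e) = GIedge gsrc grng e.
Proof. by move=> <-; rewrite /= eqxx. Qed.
Lemma mul_hW (w0 : V) e : GImul (idem_e w0 e) (GIvertex Ed w0) = idem_e w0 e.
Proof. by rewrite /= eqxx. Qed.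
Lemma mul_Wh (w0 : V) e : GImul (GIvertex Ed w0) (idem_e w0 e) = idem_e w0 e.
Proof. by rewrite /= eqxx. Qed.

Lemma uzv u v : prng grng u = prng grng v ->
  GImul (GImul (uinv u) (Some (u, v))) (vpth v) = GIvertex Ed (prng grng u).
Proof.
move=> e; rewrite /= eqxx prefix_refl /= drop_size eqxx prefix_refl /= drop_size.
by rewrite e.
Qed.

Lemma cand_full u v : cand u v (size u.2) = Some (u, v).
Proof. by rewrite /cand subnn subn0 !take_size; case: u; case: v. Qed.

Lemma cand_lt u v j : j < size u.2 -> cand u v j <> Some (u, v).
Proof.
move=> lt [] /(congr1 (fun p => size p.2)) /=; rewrite size_take lt => E.
by move: lt; rewrite E ltnn.
Qed.
End Comb.

Section Topo.
Set Implicit Arguments. Unset Strict Implicit.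
Variables (V Ed : eqType) (gsrc grng : Ed -> V) (S : topologicalType)
  (mul : S -> S -> S) (f : GIraw V Ed -> S).
Local Notation G := (GIelem gsrc grng).
Hypotheses (hS : hausdorff_space S)
  (cl : forall a : S, continuous (mul a))
  (cr : forall a : S, continuous (fun x => mul x a))
  (finj : {in G &, injective f})
  (fhom : forall x y, G x -> G y -> f (GImul x y) = mul (f x) (f y)).

Lemma pre_nbhs (g : S -> S) (cg : continuous g) x A :
  nbhs (g x) A -> nbhs x (g @^-1` A).
Proof. by move=> nA; apply: (cg x A nA). Qed.

Lemma nbhs_C1 (p q : S) : p <> q -> nbhs p (~` [set q]).
Proof.
move=> pq; apply: open_nbhs_nbhs; split.
  exact/closed_openC/accessible_closed_set1/hausdorff_accessible.
by move=> /= E; apply: pq.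
Qed.

Lemma sep (p q : S) : p <> q ->
  exists A, exists B, [/\ nbhs p A, nbhs q B & forall s, A s -> B s -> False].
Proof.
move=> pq; apply: contrapT => H; apply: pq; apply: hS => A B nA nB.
apply: contrapT => nE; apply: H; exists A, B; split => // s As Bs.
by apply: nE; exists s.
Qed.

Lemma fne x y : G x -> G y -> x <> y -> f x <> f y.
Proof. by move=> Gx Gy xy E; apply: xy; apply: finj => //; apply: mem_set. Qed.

Lemma keynz x y : G x -> G y -> ~ (mul (f x) (f y) = f None) -> GImul x y != None.
Proof. by move=> Gx Gy n; apply/eqP => E; apply: n; rewrite -fhom // E. Qed.

Lemma vertex_nbhs (w0 : V) : exists2 N, nbhs (f (GIvertex Ed w0)) N &
  forall y, G y -> N (f y) -> y = GIvertex Ed w0.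
Proof.
set W := GIvertex Ed w0.
have GW : G W := G_vertex gsrc grng w0.
have GN : G None := G_None gsrc grng.
have W0 : f W <> f None by apply: fne.
set O0 := ~` [set f None].
have nO0 : nbhs (f W) O0 := nbhs_C1 W0.
have N1 : nbhs (f W) (mul (f W) @^-1` O0).
  by apply: pre_nbhs; [exact: cl|]; rewrite -fhom // mulWW.
have N2 : nbhs (f W) ((fun s => mul s (f W)) @^-1` O0).
  by apply: pre_nbhs; [exact: cr|]; rewrite /= -fhom // mulWW.
case: (pselect (exists e, gsrc e = w0)) => [[e He]|ne]; last first.
  exists (mul (f W) @^-1` O0 `&` (fun s => mul s (f W)) @^-1` O0).
    exact: filterI.
  move=> y Gy [n1 n2]; apply: (vert_noedge Gy).
  - by move=> e; apply/eqP => E; apply: ne; exists e.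
  - exact: keynz.
  - exact: keynz.
have Gi := G_invedge gsrc grng e.
have Ge := G_edge gsrc grng e.
have Gh := G_idem grng He.
have N3 : nbhs (f W) (mul (f (GIinvedge gsrc grng e)) @^-1` O0).
  apply: pre_nbhs; [exact: cl|]; rewrite -fhom // mul_invW //.
  by apply: nbhs_C1; apply: fne.
have N4 : nbhs (f W) ((fun s => mul s (f (GIedge gsrc grng e))) @^-1` O0).
  apply: pre_nbhs; [exact: cr|]; rewrite /= -fhom // mul_Wedge //.
  by apply: nbhs_C1; apply: fne.
have hW : idem_e w0 e <> W by [].
have [A [B [nA nB AB]]] := sep (fne GW Gh (nesym hW)).
have N6 : nbhs (f W) (mul (f (idem_e w0 e)) @^-1` B).
  by apply: pre_nbhs; [exact: cl|]; rewrite -fhom // mul_hW.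
have N7 : nbhs (f W) ((fun s => mul s (f (idem_e w0 e))) @^-1` B).
  by apply: pre_nbhs; [exact: cr|]; rewrite /= -fhom // mul_Wh.
exists ((mul (f W) @^-1` O0) `&` ((fun s => mul s (f W)) @^-1` O0) `&`
   (mul (f (GIinvedge gsrc grng e)) @^-1` O0) `&`
   ((fun s => mul s (f (GIedge gsrc grng e))) @^-1` O0) `&` A `&`
   (mul (f (idem_e w0 e)) @^-1` B) `&`
   ((fun s => mul s (f (idem_e w0 e))) @^-1` B)).
  by repeat apply: filterI.
move=> y Gy [[[[[[n1 n2] n3] n4] n5] n6] n7].
have [//||] := vert_edge Gy He (keynz GW Gy n1) (keynz Gy GW n2) (keynz Gi Gy n3) (keynz Gy Ge n4).
- by move=> E; exfalso; apply: (AB (f y)) => //; move: n6; rewrite /= -fhom // E.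
- by move=> E; exfalso; apply: (AB (f y)) => //; move: n7; rewrite /= -fhom // E.
Qed.

Lemma iso_nbhs z : G z -> z <> None ->
  exists2 N, nbhs (f z) N & forall y, G y -> N (f y) -> y = z.
Proof.
case: z => [[u v]|] // Gz _; have [pu pv euv] := Gz.
have [NW nNW HW] := vertex_nbhs (prng grng u).
have Ga : G (uinv grng u) := G_uinv pu.
have Gb : G (vpth grng v) := G_vpth pv.
set a := f (uinv grng u); set b := f (vpth grng v).
have N1 : nbhs (f (Some (u, v))) (mul a @^-1` ((fun s => mul s b) @^-1` NW)).
  apply: pre_nbhs; [exact: cl|]; apply: pre_nbhs; [exact: cr|].
  rewrite /= /a /b -fhom // -fhom ?uzv //; exact: G_mul.
have N2 : nbhs (f (Some (u, v)))
   [set s | forall j : 'I_(size u.2), G (cand u v j) -> s <> f (cand u v j)].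
  apply: (@filter_forall _ _ (fun j s => G (cand u v (nat_of_ord j)) -> s <> f (cand u v j))) => j.
  case: (pselect (G (cand u v j))) => [Gc|nGc].
    have neq : Some (u, v) <> cand u v j.
      by move=> E; exact: (@cand_lt _ _ u v j (ltn_ord j) (esym E)).
    apply: filterS (nbhs_C1 (fne Gz Gc neq)).
    by move=> s ns _ E; apply: ns.
  by apply: nearW => s.
exists (mul a @^-1` ((fun s => mul s b) @^-1` NW) `&`
   [set s | forall j : 'I_(size u.2), G (cand u v j) -> s <> f (cand u v j)]).
  exact: filterI.
move=> y Gy [n1 n2].
have Gay : G (GImul (uinv grng u) y) by apply: G_mul.
move: n1; rewrite /= /a /b -fhom // -fhom // => /HW.
move=> /(_ (G_mul Gay Gb)) /reduce [j le_j Ey].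
case: (ltngtP j (size u.2)) le_j => // [lt _|Ej _]; last by rewrite Ey Ej cand_full.
by exfalso; apply: (n2 (Ordinal lt)); rewrite -?Ey.
Qed.

Hypothesis dense : closure (f @` G) = [set: S].

Lemma gi_isolated z : G z -> z <> None -> open [set f z].
Proof.
move=> Gz nz; have [N nN HN] := iso_nbhs Gz nz.
rewrite nbhsE in nN; case: nN => O [oO Oz] ON.
suff -> : [set f z] = O by [].
apply/seteqP; split => [s -> //|s Os].
apply: hS => A B nA nB.
have nAO : nbhs s (A `&` O) by apply: filterI => //; apply: open_nbhs_nbhs.
have : closure (f @` G) s by rewrite dense.
move=> /(_ _ nAO) [t [[y Gy <-] [Ay Oy]]].
rewrite (HN y Gy (ON _ Oy)) in Ay.
by exists (f z); split => //; apply: nbhs_singleton.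
Qed.
End Topo.

Theorem corollary2p3 (V Ed : eqType) (gsrc grng : Ed -> V)
  (S : topologicalType) (mul : S -> S -> S)
  (f : GIraw V Ed -> S) :
  hausdorff_space S ->
  semitopological_semigroup mul ->
  CLP_compact S ->
  (* f embeds G(E) into S as a subsemigroup ... *)
  {in GIelem gsrc grng &, injective f} ->
  (forall x y, GIelem gsrc grng x -> GIelem gsrc grng y ->
     f (GImul x y) = mul (f x) (f y)) ->
  (* ... which is dense in S *)
  closure (f @` GIelem gsrc grng) = [set: S] ->
  forall X : set (GIraw V Ed), X `<=` GIelem gsrc grng ->
    countably_compact_at (closure (f @` X)) (f @` X).
Proof.
move=> hS [_ [cl cr]] clp finj fhom dense X XG B BX Binf.
apply: contrapT => H.
have nlp : forall x, ~ limit_point B x.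
  move=> x lx; apply: H; exists x => //.
  by apply: (closureS BX); apply: subset_limit_point.
pose B' := B `\` [set f None].
have B'iso : forall b, B' b -> open [set b].
  move=> b [Bb nb]; have [y Xy Ey] := BX b Bb.
  rewrite -Ey; apply: (gi_isolated hS cl cr finj fhom dense (XG _ Xy)).
  by move=> y0; apply: nb; rewrite -Ey y0.
have clB' : closed B'.
  move=> x cx; apply: contrapT => nx; apply: (nlp x) => U nU.
  have [y [[By ny] Uy]] := cx U nU.
  exists y; split => //; apply/eqP => E; apply: nx; rewrite -E; by split.
have opB' : open B'.
  rewrite openE => b Bb; rewrite /interior.
  apply: filterS (open_nbhs_nbhs (conj (B'iso b Bb) erefl)).
  by move=> x ->.
pose F := [set A : set S | A = ~` B' \/ exists2 b, B' b & A = [set b]].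
have clF : forall A, F A -> clopen A.
  move=> A [->|[b Bb ->]]; split.
  - exact: closed_openC.
  - exact: open_closedC.
  - exact: B'iso.
  - exact/accessible_closed_set1/hausdorff_accessible.
have cov : [set: S] `<=` \bigcup_(A in F) A.
  move=> s _; case: (pselect (B' s)) => [Bs|nBs].
    by exists [set s] => //; right; exists s.
  by exists (~` B') => //; left.
have [Gf [finG GF] covG] := clp F clF cov.
have finB' : finite_set B'.
  apply: (@sub_finite_set _ _ (\bigcup_(A in Gf) (A `&` B'))).
    move=> b Bb; have [A GA Ab] := covG b I.
    by exists A => //; split.
  apply: bigcup_finite => // A GA.
  case: (GF _ GA) => [->|[b _ ->]].
    by apply: (@sub_finite_set _ _ set0) => // x [].
  exact: (sub_finite_set (@subIsetl _ _ _) (finite_set1 b)).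
apply: Binf.
apply: (@sub_finite_set _ _ (B' `|` [set f None])).
  move=> b Bb; case: (pselect (b = f None)) => [->|nb]; first by right.
  by left; split.
by rewrite finite_setU; split => //; apply: finite_set1.
Qed.
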